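(* Let $A,B$ be commutative rings, $f:A\to B$ a ring homomorphism and $J$ an ideal of $B$ with $J\subseteq\operatorname{Nil}(B)$. Let $\mathfrak a$ be an ideal of $A$ and $\mathfrak p$ a prime ideal of $A$. Then (1) $\mathfrak p$ is a minimal prime over $\mathfrak a$ if and only if $\mathfrak p^{\prime_f}$ is a minimal prime over $\mathfrak a^e$; (2) $\operatorname{ht}\mathfrak a=\operatorname{ht}\mathfrak a^e$; (3) the only minimal prime ideal of $A\bowtie^fJ$ over $\mathfrak p^e$ is $\mathfrak p^{\prime_f}$; in particular $\operatorname{ht}\mathfrak p^e=\operatorname{ht}\mathfrak p^{\prime_f}$.
   Context: $\operatorname{Nil}(B)$ is the nilradical of $B$. $A\bowtie^fJ=\{(a,f(a)+j): a\in A,\ j\in J\}\subseteq A\times B$; $\iota_A(x)=(x,f(x))$ and $\mathfrak a^e=\iota_A(\mathfrak a)(A\bowtie^fJ)$. For a prime $\mathfrak p$ of $A$, $\mathfrak p^{\prime_f}=\{(p,f(p)+j): p\in\mathfrak p,\ j\in J\}$. Height of an ideal $I$ of a ring $R$: $\operatorname{ht}I=\inf\{\dim R_\mathfrak P:\mathfrak P\supseteq I$ prime$\}$. *)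

(* Defs.v *)
From HB Require Import structures.
From mathcomp Require Import all_boot all_order all_algebra.
Set Implicit Arguments. Unset Strict Implicit. Unset Printing Implicit Defensive.
Import GRing.Theory.
Local Open Scope ring_scope.

Definition subs (T : Type) := T -> Prop.
Definition incl (T : Type) (X Y : subs T) := forall x, X x -> Y x.
Definition sincl (T : Type) (X Y : subs T) := incl X Y /\ exists x, Y x /\ ~ X x.
Definition seteq (T : Type) (X Y : subs T) := forall x, X x <-> Y x.
Definition fullset (T : Type) : subs T := fun _ => True.
Arguments fullset T _ : clear implicits.

Section RingNotions.
Variable R : comPzRingType.
(* S : subs R is the carrier of a subring of R; ideals/primes are those of
   the ring S.  For a ring A itself, take S := fullset A. *)
Variable S : subs R.

Definition is_ideal (I : subs R) : Prop :=
  incl I S /\ I 0 /\ (forall x y, I x -> I y -> I (x + y)) /\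
  (forall r x, S r -> I x -> I (r * x)).

Definition is_prime (P : subs R) : Prop :=
  is_ideal P /\ ~ P 1 /\
  (forall x y, S x -> S y -> P (x * y) -> P x \/ P y).

Definition minimal_prime_over (I P : subs R) : Prop :=
  is_prime P /\ incl I P /\
  (forall Q, is_prime Q -> incl I Q -> incl Q P -> incl P Q).

Definition ideal_gen (X : subs R) : subs R :=
  fun z => forall I, is_ideal I -> incl X I -> I z.

Definition prime_ht_ge (P : subs R) (n : nat) : Prop :=
  exists c : nat -> subs R,
    (forall i, (i <= n)%N -> is_prime (c i)) /\
    (forall i, (i < n)%N -> sincl (c i) (c i.+1)) /\
    incl (c n) P.

(* ht I >= n  (ht I = inf of dim S_P over primes P containing I, in N ∪ {oo}) *)
Definition ideal_ht_ge (I : subs R) (n : nat) : Prop :=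
  forall P, is_prime P -> incl I P -> prime_ht_ge P n.

End RingNotions.

Definition same_height (R1 R2 : comPzRingType) (S1 : subs R1) (S2 : subs R2)
  (I1 : subs R1) (I2 : subs R2) : Prop :=
  forall n, ideal_ht_ge S1 I1 n <-> ideal_ht_ge S2 I2 n.

Definition nilradical (B : comPzRingType) : subs B :=
  fun x => exists n, x ^+ n = 0.
Arguments nilradical B _ : clear implicits.

Section Amalgamation.
Variables (A B : comPzRingType) (f : {rmorphism A -> B}) (J : subs B).

Definition amalg : subs (A * B)%type :=
  fun z => exists a j, J j /\ z = (a, f a + j).

Definition iotaA (x : A) : (A * B)%type := (x, f x).

Definition ext_ideal (a : subs A) : subs (A * B)%type :=
  ideal_gen amalg (fun z => exists x, a x /\ z = iotaA x).

Definition prime_f (p : subs A) : subs (A * B)%type :=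
  fun z => exists p0 j, p p0 /\ J j /\ z = (p0, f p0 + j).
End Amalgamation.

(* Main.v *)
Require Import Defs.
From mathcomp Require Import all_boot all_order all_algebra.
From Stdlib Require Import FunctionalExtensionality PropExtensionality.
Import GRing.Theory.
Local Open Scope ring_scope.

Section Aux.
Variables (A B : comPzRingType) (f : {rmorphism A -> B}) (J : subs B).
Hypothesis hJ : is_ideal (fullset B) J.
Hypothesis hJnil : incl J (nilradical B).

Definition proj (P : subs (A * B)%type) : subs A := fun x => exists b, P (x, b).

Lemma J0 : J 0. Proof. by case: hJ => _ [H _]. Qed.
Lemma JD x y : J x -> J y -> J (x + y). Proof. by case: hJ => _ [_ [H _]]; apply: H. Qed.
Lemma JM r x : J x -> J (r * x). Proof. by case: hJ => _ [_ [_ H]]; apply: H. Qed.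
Lemma JB x y : J x -> J y -> J (x - y).
Proof. move=> hx hy; apply: JD => //; rewrite -mulN1r; exact: JM. Qed.

Lemma amalg_iota x : amalg f J (iotaA f x).
Proof. exists x, 0; split; first exact: J0. by rewrite addr0. Qed.

Lemma amalg_0j j : J j -> amalg f J (0, j).
Proof. move=> hj; exists 0, j; split => //. by rewrite rmorph0 add0r. Qed.

Lemma proj_prime_f q : proj (prime_f f J q) = q.
Proof.
apply: functional_extensionality => x; apply: propositional_extensionality; split.
- by case=> b [p0 [j [hp0 [_ [-> _]]]]].
- move=> hx; exists (f x + 0), x, 0; split => //; split => //; exact: J0.
Qed.

Lemma prime_f_incl q1 q2 : incl q1 q2 <-> incl (prime_f f J q1) (prime_f f J q2).
Proof.
split.
- move=> H z [p0 [j [hp [hj ->]]]]; exists p0, j; split => //; exact: H.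
- move=> H x hx.
  have : prime_f f J q1 (x, f x + 0) by exists x, 0; split => //; split => //; exact: J0.
  by move=> /H [p0 [j [hp [_ [-> _]]]]].
Qed.

Lemma prime_f_sincl q1 q2 : sincl q1 q2 <-> sincl (prime_f f J q1) (prime_f f J q2).
Proof.
split.
- case=> /prime_f_incl H [x [h2 h1]]; split => //.
  exists (x, f x + 0); split; first by exists x, 0; split => //; split => //; exact: J0.
  by case=> p0 [j [hp [_ [e _]]]]; apply: h1; rewrite e.
- case=> /prime_f_incl H [z [[p0 [j [hp [hj ez]]]] h1]]; split => //.
  exists p0; split => //; move=> hq; apply: h1; exists p0, j; split => //.
Qed.

Lemma prime_f_prime {q} : is_prime (fullset A) q -> is_prime (amalg f J) (prime_f f J q).
Proof.
case=> [[_ [q0 [qD qM]]] [q1 qP]].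
split; [split; [|split; [|split]]|split].
- move=> z [p0 [j [_ [hj ->]]]]; by exists p0, j.
- exists 0, 0; split => //; split; first exact: J0. by rewrite rmorph0 addr0.
- move=> x y [p0 [j [hp [hj ->]]]] [p1 [k [hp' [hk ->]]]].
  exists (p0 + p1), (j + k); split; first exact: qD.
  split; first exact: JD.
  by rewrite /= rmorphD addrACA.
- move=> r x [a0 [j0 [hj0 ->]]] [p0 [j [hp [hj ->]]]].
  exists (a0 * p0), (f a0 * j + j0 * (f p0 + j)); split; first exact: qM.
  split; first by apply: JD; [apply: JM | rewrite mulrC; apply: JM].
  rewrite /= rmorphM; congr pair; by rewrite mulrDl mulrDr addrA.
- by case=> p0 [j [hp [_ [e _]]]]; apply: q1; rewrite e.
- move=> x y [x1 [j1 [hj1 ->]]] [y1 [k1 [hk1 ->]]] [p0 [j [hp [_ [e _]]]]].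
  move: e => /= e; rewrite -e in hp.
  case: (qP x1 y1 I I hp) => h; [left; by exists x1, j1|right; by exists y1, k1].
Qed.

Section PrimeAmalg.
Variable P : subs (A * B)%type.
Hypothesis hP : is_prime (amalg f J) P.

Lemma PS {z} : P z -> amalg f J z. Proof. by case: hP => [[H _] _]; apply: H. Qed.
Lemma P0 : P 0. Proof. by case: hP => [[_ [H _]] _]. Qed.
Lemma PD {x y} : P x -> P y -> P (x + y). Proof. by case: hP => [[_ [_ [H _]]] _]; apply: H. Qed.
Lemma PM {r x} : amalg f J r -> P x -> P (r * x). Proof. by case: hP => [[_ [_ [_ H]]] _]; apply: H. Qed.
Lemma P1 : ~ P 1. Proof. by case: hP => _ [H _]. Qed.
Lemma PP {x y} : amalg f J x -> amalg f J y -> P (x * y) -> P x \/ P y.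
Proof. by case: hP => _ [_ H]; apply: H. Qed.

Lemma P0j j : J j -> P (0, j).
Proof.
move=> hj; case: (hJnil _ hj) => n hn.
suff H : forall k, P (0, j ^+ k.+1) -> P (0, j).
  apply: (H n); rewrite exprSr hn mul0r; exact: P0.
elim=> [|k IH]; first by rewrite expr1.
move=> h; have hjk : J (j ^+ k.+1) by rewrite exprSr; apply: JM.
have : P ((0, j) * (0, j ^+ k.+1)).
  have -> : (0, j) * (0, j ^+ k.+1) = (0 * 0, j * j ^+ k.+1) :> A * B by [].
  by rewrite mul0r -exprS.
by case/PP; [exact: amalg_0j| exact: amalg_0j | | exact: IH].
Qed.

Lemma Pshift {x b j} : P (x, b) -> J j -> P (x, f x + j).
Proof.
move=> hxb hj; have := PS hxb; case=> a0 [j0 [hj0 e]].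
case: e => ex eb; subst a0.
have -> : (x, f x + j) = (x, b) + (0, j - j0).
  rewrite eb; have -> : (x, f x + j0) + (0, j - j0) = (x + 0, f x + j0 + (j - j0)) :> A * B by [].
  by rewrite addr0 [j - j0]addrC addrA addrK.
apply: PD => //; apply: P0j; exact: JB.
Qed.

Lemma P_eq : P = prime_f f J (proj P).
Proof.
apply: functional_extensionality => z; apply: propositional_extensionality; split.
- move=> hz; have := PS hz; case=> a0 [j0 [hj0 ez]].
  exists a0, j0; split => //; by exists (f a0 + j0); rewrite -ez.
- case=> p0 [j [[b hb] [hj ->]]]; exact: Pshift hb hj.
Qed.

Lemma proj_prime : is_prime (fullset A) (proj P).
Proof.
have Pio x b : P (x, b) -> P (iotaA f x).
  move=> h; have := Pshift h J0; by rewrite addr0.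
split; [split; [|split; [|split]]|split].
- by [].
- exists 0; exact: P0.
- move=> x y [b hb] [c hc]; exists (b + c); exact: PD hb hc.
- move=> r x _ [b hb]; exists (f r * b).
  have := PM (amalg_iota r) hb; by [].
- case=> b hb; apply: P1; have := Pshift hb J0; by rewrite rmorph1 addr0.
- move=> x y _ _ [b hb]; have := Pio _ _ hb; rewrite /iotaA rmorphM => h.
  have : P (iotaA f x * iotaA f y) by [].
  case/PP; try exact: amalg_iota; move=> h'; [left; exists (f x)|right; exists (f y)]; exact: h'.
Qed.
End PrimeAmalg.
Arguments proj_prime {P}.
Arguments P_eq {P}.

Lemma ext_incl (a q : subs A) : is_prime (fullset A) q ->
  incl (ext_ideal f J a) (prime_f f J q) <-> incl a q.
Proof.
move=> hq; split.
- move=> H x hx.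
  have : ext_ideal f J a (iotaA f x) by move=> I _ HI; apply: HI; exists x.
  move/H; case=> p0 [j [hp [_ [e _]]]]; by rewrite e.
- move=> H z hz; apply: hz; first by case: (prime_f_prime hq).
  move=> w [x [hx ->]]; exists x, 0; split; first exact: H.
  split; first exact: J0. by rewrite addr0.
Qed.

Lemma ht_transfer q n : is_prime (fullset A) q ->
  prime_ht_ge (fullset A) q n <-> prime_ht_ge (amalg f J) (prime_f f J q) n.
Proof.
move=> hq; split.
- case=> c [hc1 [hc2 hc3]]; exists (fun i => prime_f f J (c i)); split; [|split].
  + move=> i hi; exact: prime_f_prime (hc1 i hi).
  + move=> i hi; apply/prime_f_sincl; exact: hc2.
  + by apply/prime_f_incl.
- case=> c [hc1 [hc2 hc3]]; exists (fun i => proj (c i)); split; [|split].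
  + move=> i hi; exact: proj_prime (hc1 i hi).
  + move=> i hi; apply/prime_f_sincl.
    rewrite -(P_eq (hc1 i (ltnW hi))) -(P_eq (hc1 i.+1 hi)); exact: hc2.
  + apply/prime_f_incl; rewrite -(P_eq (hc1 n (leqnn n))); exact: hc3.
Qed.
End Aux.

Theorem lemma4p4 (A B : comPzRingType) (f : {rmorphism A -> B}) (J : subs B)
  (hJ : is_ideal (fullset B) J) (hJnil : incl J (nilradical B))
  (a : subs A) (ha : is_ideal (fullset A) a)
  (p : subs A) (hp : is_prime (fullset A) p) :
  (minimal_prime_over (fullset A) a p <->
     minimal_prime_over (amalg f J) (ext_ideal f J a) (prime_f f J p)) /\
  same_height (fullset A) (amalg f J) a (ext_ideal f J a) /\
  (minimal_prime_over (amalg f J) (ext_ideal f J p) (prime_f f J p) /\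
   (forall Q, minimal_prime_over (amalg f J) (ext_ideal f J p) Q ->
              seteq Q (prime_f f J p)) /\
   same_height (amalg f J) (amalg f J) (ext_ideal f J p) (prime_f f J p)).
Proof.
have Peq := @P_eq A B f J hJ hJnil.
have Pprj := @proj_prime A B f J hJ hJnil.
have pfp := @prime_f_prime A B f J hJ.
have eincl := @ext_incl A B f J hJ.
have pfi := @prime_f_incl A B f J hJ.
have htt := @ht_transfer A B f J hJ hJnil.
have part1 : forall a, minimal_prime_over (fullset A) a p <->
     minimal_prime_over (amalg f J) (ext_ideal f J a) (prime_f f J p).
  move=> a'; split.
  - case=> _ [hap hmin]; split; first exact: pfp.
    split; first by apply/eincl.
    move=> Q hQ h1 h2; rewrite (Peq _ hQ) in h1 h2 *.
    have hq := Pprj _ hQ.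
    apply/pfi; apply: hmin => //; first by apply/(eincl).
    by apply/pfi.
  - case=> _ [hap hmin]; split => //; split; first by apply/(eincl).
    move=> q hq h1 h2; apply/(pfi); apply: hmin.
    + exact: pfp.
    + by apply/(eincl).
    + by apply/pfi.
split; first exact: part1.
split.
  move=> n; split.
  - move=> H P hP hsub; rewrite (Peq _ hP) in hsub *.
    have hq := Pprj _ hP.
    apply/(htt) => //; apply: H => //; by apply/(eincl).
  - move=> H q hq hsub; apply/(htt) => //; apply: H.
    + exact: pfp.
    + by apply/(eincl).
have hmp : minimal_prime_over (amalg f J) (ext_ideal f J p) (prime_f f J p).
  apply/part1; split => //; split => //; by move=> Q _ _.
split => //; split.
- move=> Q [hQ [h1 hmin]] z; rewrite (Peq _ hQ) in h1 hmin *.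
  have hq := Pprj _ hQ.
  have hpq : incl p (proj A B Q) by apply/(eincl).
  have h2 : incl (prime_f f J p) (prime_f f J (proj A B Q)) by apply/pfi.
  case: hmp => hmp1 [hmp2 _].
  split; [apply: (hmin (prime_f f J p)) => // | exact: h2 z].
- move=> n; split.
  + move=> H P hP hsub; apply: H => //; rewrite (Peq _ hP) in hsub *.
    apply/(eincl); first exact: Pprj _ hP.
    apply/pfi; exact: hsub.
  + move=> H P hP hsub; apply: H => //; rewrite (Peq _ hP) in hsub *.
    apply/pfi; apply/(eincl) => //; exact: Pprj _ hP.
Qed.
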